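(* Let $D$ be a strong nonseparable digraph and let $(D_0,D_1,\ldots,D_k)$ be an ear decomposition of $D$. Let $i\in\{1,\ldots,k\}$ and let $P_{i-1}=(x_0,x_1,\ldots,x_{r-1},x_r)$ be the ear of $D_{i-1}$ in $D$ (so $D_i=D_{i-1}\cup P_{i-1}$), with $l(P_{i-1})\geq 2$. If $D_i$ has a kernel $N$ and one of the following holds: (1) $x_0,x_r\in N$; (2) $x_0\in N$ and $x_r\notin N$; (3) $x_0\notin N$, $x_r\in N$ and $l(P_{i-1})$ is even; (4) $x_0,x_r\notin N$ and $l(P_{i-1})$ is odd; then $D_{i-1}$ has a kernel.
   Context: All digraphs are finite, without loops or multiple arcs. Paths and cycles are directed; the length $l(P)$ of a path $P$ is its number of arcs. A digraph is strong if for every ordered pair of vertices $x,y$ there is a directed path from $x$ to $y$; it is nonseparable if its underlying undirected graph is nonseparable (has no cut vertex). For a subdigraph $H$ of $D$, an ear of $H$ in $D$ is a directed path $(x_0,\ldots,x_r)$ in $D$ whose end vertices lie in $H$ and whose internal vertices do not lie in $H$. An ear decomposition of a nonseparable strong digraph $D$ is a sequence $(D_0,\ldots,D_k)$ of nonseparable strong subdigraphs of $D$ such that $D_0$ is a directed cycle, $D_{j+1}=D_j\cup P_j$ with $P_j$ an ear of $D_j$ in $D$ for each $j\in\{0,\ldots,k-1\}$, and $D_k=D$. A kernel of a digraph is a set $N$ of vertices that is independent (no arc between two of its vertices) and absorbent (every vertex not in $N$ has an out-neighbour in $N$). *)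

(* Defs.v *)
From mathcomp Require Import all_boot.
Set Implicit Arguments. Unset Strict Implicit. Unset Printing Implicit Defensive.

(* A digraph D is given by a finite vertex type T (all of T is the vertex set)
   and an irreflexive arc relation E (no loops, no multiple arcs). *)
Definition subdigraph (T : finType) := ({set T} * {set T * T})%type.

Section Digraphs.
Variable T : finType.
Implicit Types (E : rel T) (H : subdigraph T).

Definition whole_digraph E : subdigraph T := ([set: T], [set a | E a.1 a.2]).

Definition is_subdigraph E H :=
  forall a, a \in H.2 -> [/\ E a.1 a.2, a.1 \in H.1 & a.2 \in H.1].

Definition arcrel H : rel T := fun x y => (x, y) \in H.2.

Definition strong H :=
  forall x y, x \in H.1 -> y \in H.1 -> connect (arcrel H) x y.

Definition und_avoid H (X : {set T}) : rel T :=
  fun x y => [&& x \notin X, y \notin X & (arcrel H x y || arcrel H y x)].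

Definition nonseparable H :=
  (forall x y, x \in H.1 -> y \in H.1 -> connect (und_avoid H set0) x y) /\
  (forall v x y, v \in H.1 -> x \in H.1 :\ v -> y \in H.1 :\ v ->
      connect (und_avoid H [set v]) x y).

Definition is_dicycle E H :=
  exists c : seq T, [/\ 1 < size c, uniq c, cycle E c,
     H.1 = [set x in c] & H.2 = [set a in zip c (rot 1 c)]].

(* An ear is represented as (x0, mid, xr), the directed path
   x0 :: mid ++ [:: xr]; its length is size mid + 1. *)
Definition ear_seq (P : T * seq T * T) : seq T :=
  P.1.1 :: rcons P.1.2 P.2.
Definition ear_len (P : T * seq T * T) : nat := (size P.1.2).+1.
Definition ear_arcs (P : T * seq T * T) : {set T * T} :=
  [set a in zip (P.1.1 :: P.1.2) (rcons P.1.2 P.2)].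

Definition is_ear E H (P : T * seq T * T) :=
  [/\ path E P.1.1 (rcons P.1.2 P.2), uniq (ear_seq P),
      P.1.1 \in H.1, P.2 \in H.1 & all (fun x => x \notin H.1) P.1.2].

Definition add_ear H (P : T * seq T * T) : subdigraph T :=
  (H.1 :|: [set x in ear_seq P], H.2 :|: ear_arcs P).

Definition ear_decomposition E (k : nat) (Ds : nat -> subdigraph T)
    (Ps : nat -> T * seq T * T) :=
  [/\ is_dicycle E (Ds 0),
      (forall j, j <= k -> [/\ is_subdigraph E (Ds j), nonseparable (Ds j)
                             & strong (Ds j)]),
      (forall j, j < k -> is_ear E (Ds j) (Ps j) /\
                          Ds j.+1 = add_ear (Ds j) (Ps j)) &
      Ds k = whole_digraph E].

Definition is_kernel H (N : {set T}) :=
  [/\ N \subset H.1,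
      (forall x y, x \in N -> y \in N -> (x, y) \notin H.2) &
      (forall v, v \in H.1 :\: N -> exists2 y, y \in N & (v, y) \in H.2)].

Definition has_kernel H := exists N, is_kernel H N.

End Digraphs.

(* Main.v *)
Require Import Defs.
From mathcomp Require Import all_boot.

Section Aux.
Variables (T : finType) (x0 xr : T) (mid : seq T).
Let s := x0 :: rcons mid xr.
Let u := x0 :: mid.
Let w := rcons mid xr.

Lemma nth_u j : j < (size mid).+1 -> nth x0 u j = nth x0 s j.
Proof.
case: j => //= m Hm; rewrite nth_rcons ifT //.
Qed.

Lemma size_uw : size u = size w.
Proof. by rewrite /u /w size_rcons. Qed.

Lemma arcs_in j : j < (size mid).+1 ->
  (nth x0 s j, nth x0 s j.+1) \in zip u w.
Proof.
move=> Hj; rewrite -nth_u // -[nth x0 s j.+1]/(nth x0 w j) -(nth_zip x0 x0 _ size_uw).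
by apply: mem_nth; rewrite size_zip -size_uw minnn.
Qed.

Lemma arcs_out a b : (a, b) \in zip u w ->
  exists2 j, j < (size mid).+1 & a = nth x0 s j /\ b = nth x0 s j.+1.
Proof.
move=> Hab; have := nth_index (x0, x0) Hab.
have Hj : index (a, b) (zip u w) < (size mid).+1.
  by move: (Hab); rewrite -index_mem size_zip -size_uw minnn.
move: Hj; set j := index _ _ => Hj.
rewrite nth_zip ?size_uw // => -[Ha Hb]; exists j => //.
by rewrite -Ha -Hb nth_u.
Qed.
End Aux.

Theorem mainTheorem6 (T : finType) (E : rel T) (k : nat)
    (Ds : nat -> subdigraph T) (Ps : nat -> T * seq T * T) (i : nat)
    (N : {set T}) :
  irreflexive E ->
  strong (whole_digraph E) -> nonseparable (whole_digraph E) ->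
  ear_decomposition E k Ds Ps ->
  1 <= i <= k ->
  2 <= ear_len (Ps i.-1) ->
  is_kernel (Ds i) N ->
  let x0 := (Ps i.-1).1.1 in
  let xr := (Ps i.-1).2 in
  let l := ear_len (Ps i.-1) in
  [\/ x0 \in N /\ xr \in N,
      x0 \in N /\ xr \notin N,
      [/\ x0 \notin N, xr \in N & ~~ odd l]
    | [/\ x0 \notin N, xr \notin N & odd l]] ->
  has_kernel (Ds i.-1).
Proof.
move=> Eirr _ _ [Hcyc Hsub Hear Hwhole] /andP[i1 ik] Hlen [NsubDi Nind Nabs] /=.
case: i => [|i] in i1 ik Hlen NsubDi Nind Nabs * => //=.
have [[Hpath Huniq Hx0 Hxr Hmid] HDi] := Hear i ik.
have [HsubH _ _] := Hsub i (ltnW ik).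
rewrite HDi in NsubDi Nind Nabs.
move: Hlen Hpath Huniq Hx0 Hxr Hmid NsubDi Nind Nabs.
rewrite /=; set H := Ds i; case: (Ps i) => [[x0 mid] xr] /=.
move=> Hlen Hpath Huniq Hx0 Hxr Hmid NsubDi Nind Nabs Hc.
set s := x0 :: rcons mid xr.
have Hu : uniq s := Huniq.
set G := add_ear H (x0, mid, xr).
have Hs : size s = (size mid).+2 by rewrite /s /= size_rcons.
have Fin : forall j, 0 < j < (size mid).+1 -> nth x0 s j \notin H.1.
  case=> [//|m] /= Hm; rewrite nth_rcons ifT //.
  by move/allP: Hmid; apply; apply: mem_nth.
have Fout : forall j y, 0 < j < (size mid).+1 -> (nth x0 s j, y) \in G.2 ->
    y = nth x0 s j.+1.
  move=> j y Hj; rewrite inE => /orP[Hold|Hnew].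
    by have [_ H1 _] := HsubH _ Hold; move: (Fin j Hj); rewrite H1.
  move: Hnew; rewrite inE => /arcs_out[m Hm [Ha Hb]].
  change (nth x0 s j = nth x0 s m) in Ha; change (y = nth x0 s m.+1) in Hb.
  rewrite /= in Hm.
  have Hjm : j = m.
    apply/eqP; rewrite -(nth_uniq x0 _ _ Hu) ?Ha //.
      by rewrite Hs; case/andP: Hj => _ /ltnW; rewrite ltnS.
    by rewrite Hs ltnW.
  by rewrite Hjm.
have Farc : forall j, j < (size mid).+1 -> (nth x0 s j, nth x0 s j.+1) \in G.2.
  by move=> j Hj; rewrite inE orbC inE arcs_in.
have FinV : forall j, j <= (size mid).+1 -> nth x0 s j \in G.1.
  by move=> j Hj; apply/setUP; right; rewrite inE; change (nth x0 s j \in s); rewrite mem_nth // Hs.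
have Alt : forall j, 0 < j < (size mid).+1 ->
    (nth x0 s j \in N) = ~~ (nth x0 s j.+1 \in N).
  move=> j Hj; case Hin: (nth x0 s j \in N).
    apply/esym/negP => Hn; have := Nind _ _ Hin Hn.
    by rewrite Farc //; case/andP: Hj.
  have [|y Hy Harc] := Nabs (nth x0 s j).
    by rewrite inE Hin FinV // ltnW //; case/andP: Hj.
  by rewrite (Fout _ _ Hj Harc) in Hy; rewrite Hy.
have Hlast : nth x0 s (size mid).+1 = xr by rewrite /= nth_rcons ltnn eqxx.
have Par : forall d, d < (size mid).+1 ->
    (nth x0 s ((size mid).+1 - d) \in N) = (xr \in N) (+) odd d.
  elim=> [|d IH] Hd; first by rewrite subn0 Hlast addbF.
  rewrite Alt; last by rewrite subn_gt0 Hd /= ltn_subrL.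
  rewrite subnSK; last exact: ltnW Hd. have E1 := IH (ltnW Hd). move: E1 => /=; case: (nth x0 s _ \in N); case: (xr \in N); by case: (odd d).
have H1 : (nth x0 s 1 \in N) = (xr \in N) (+) odd (size mid).
  by rewrite -Par // subSn // subnn.
exists (N :&: H.1); split.
- exact: subsetIr.
- move=> x y /setIP[xN _] /setIP[yN _]; apply/negP => Hxy.
  by have := Nind x y xN yN; rewrite inE Hxy.
- move=> v; rewrite !inE => /andP[vnot vH].
  have vN : v \notin N by move: vnot; rewrite vH andbT.
  have [|y yN Harc] := Nabs v; first by rewrite !inE vN vH.
  move: Harc; rewrite inE => /orP[Hold|Hnew].
    by have [_ _ H2] := HsubH _ Hold; exists y; rewrite // inE yN.
  move: Hnew; rewrite inE => /arcs_out[m Hm [Ha Hb]].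
  change (v = nth x0 s m) in Ha; change (y = nth x0 s m.+1) in Hb.
  rewrite /= in Hm.
  case: m Hm Ha Hb => [|m] Hm Ha Hb.
    rewrite Hb H1 in yN; rewrite /= in Ha; subst v.
    case: Hc => [[xN _]|[xN _]|[_ xrN ev]|[_ xrN od]].
    + by rewrite xN in vN.
    + by rewrite xN in vN.
    + by move: yN ev; rewrite xrN /ear_len /=; case: (odd (size mid)).
    + by move: yN od; rewrite (negbTE xrN) /ear_len /=; case: (odd (size mid)).
  by move: (Fin m.+1 Hm); rewrite -Ha vH.
Qed.
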